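(* Consider algorithm DIST-OPT as described in the context (with arbitrary step size $\gamma>0$ and arbitrary problem data), and use the convention $\lambda_j(s)=0$ for $s\le 0$. (a) If all delays are zero ($\tau^{\uparrow}_j(t)=\tau^{\downarrow}_j(t)=0$ for all $j,t$), then for all $i\in\mathcal N$ and $t\in\mathbb N$, $$z_i^P(t)=\sum_{j=1}^N R_{ij}\lambda_j(t-d_{ij}),\qquad z_i^Q(t)=\sum_{j=1}^N X_{ij}\lambda_j(t-d_{ij}),$$ where $d_{ij}=0$ if $\texttt{dist}(i,j)\le1$ and $d_{ij}=\texttt{dist}(i,j)-1$ otherwise. (b) If all delays are bounded by $\tau_{\max}$, then for all $i\in\mathcal N$ and $t\in\mathbb N$ there exist integers $0\le\bar\tau_{ij}(t)\le(\tau_{\max}+1)d$ such that $$z_i^P(t)=\sum_{j=1}^N R_{ij}\lambda_j(t-\bar\tau_{ij}(t)),\qquad z_i^Q(t)=\sum_{j=1}^N X_{ij}\lambda_j(t-\bar\tau_{ij}(t)).$$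
   Context: Network: a radial network is a tree on nodes $\{0,1,\dots,N\}$ rooted at node $0$; $\mathcal N=\{1,\dots,N\}$. Each $i\in\mathcal N$ has a unique parent $\sigma_i\in\{0,\dots,N\}$. Each edge $(h,k)$ ($h$ the parent of $k$) has resistance $r_{hk}\ge0$ and reactance $x_{hk}\ge0$. $\mathcal P_i$ is the set of edges on the path from $0$ to $i$. Define $N\times N$ matrices $R_{ij}=2\sum_{(h,k)\in\mathcal P_i\cap\mathcal P_j}r_{hk}$ and $X_{ij}=2\sum_{(h,k)\in\mathcal P_i\cap\mathcal P_j}x_{hk}$. $\texttt{dist}(i,j)$ is the number of edges on the tree path between $i$ and $j$, and $d=\max_{i,j\in\mathcal N}\texttt{dist}(i,j)$. Voltage model: $v(p,q)=Rp+Xq+v_0\mathbf 1\in\mathbb R^N$ for a fixed $v_0\in\mathbb R$. Problem data: vectors $\underline v\le\bar v$, $\underline p\le\bar p$, $\underline q\le\bar q$ in $\mathbb R^N$ and reals $a_i^{P},a_i^{Q}>0$, $b_i^P,b_i^Q$. Algorithm DIST-OPT. For $i\in\mathcal N$, the algorithmic parent of $i$ is $\sigma_i$ if $\sigma_i\neq0$; if $\sigma_i=0$, $i$ has no algorithmic parent. Let $\mathcal C_i=\{j\in\mathcal N:\sigma_j=i\}$. For each $j\in\mathcal N$ having an algorithmic parent and each $t\in\mathbb N$, there are delays $\tau^{\uparrow}_j(t),\tau^{\downarrow}_j(t)\in\mathbb Z_{\ge0}$. Write $[x]_a^b=\min(\max(x,a),b)$ and $\lceil x\rceil_+=\max(x,0)$.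 Initialization ($t=0$): for all $i\in\mathcal N$, $z_i^P(0)=z_i^Q(0)=\underline\lambda_i(0)=\bar\lambda_i(0)=\lambda_i(0)=0$ and $\alpha_i(0)=\beta_i^P(0)=\beta_i^Q(0)=\hat\alpha_i(0)=\hat\beta_i^P(0)=\hat\beta_i^Q(0)=0$; any message $\alpha_i(s),\beta_i^P(s),\beta_i^Q(s)$ with $s<0$ is $0$; if $i$ has no algorithmic parent then $\hat\beta_i^P(t)=\hat\beta_i^Q(t)=0$ for all $t$. For $t=0,1,2,\dots$ and every $i\in\mathcal N$: (1) $p_i(t)=\bigl[(z_i^P(t)-b_i^P)/a_i^P\bigr]_{\underline p_i}^{\bar p_i}$ and $q_i(t)=\bigl[(z_i^Q(t)-b_i^Q)/a_i^Q\bigr]_{\underline q_i}^{\bar q_i}$. (2) $v(t)=v(p(t),q(t))$; $\underline\lambda_i(t+1)=\lceil\underline\lambda_i(t)+\gamma(\underline v_i-v_i(t))\rceil_+$, $\bar\lambda_i(t+1)=\lceil\bar\lambda_i(t)+\gamma(v_i(t)-\bar v_i)\rceil_+$, $\lambda_i(t+1)=\underline\lambda_i(t+1)-\bar\lambda_i(t+1)$, with step size $\gamma>0$. (3) $\alpha_i(t+1)=\lambda_i(t+1)+\sum_{j\in\mathcal C_i}\hat\alpha_j(t)$, and for each $j\in\mathcal C_i$: $\beta_j^P(t+1)=R_{ii}\bigl(\lambda_i(t+1)+\sum_{r\in\mathcal C_i\setminus\{j\}}\hat\alpha_r(t)\bigr)+\hat\beta_i^P(t)$ and $\beta_j^Q(t+1)=X_{ii}\bigl(\lambda_i(t+1)+\sum_{r\in\mathcal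 C_i\setminus\{j\}}\hat\alpha_r(t)\bigr)+\hat\beta_i^Q(t)$. For each $j$ with an algorithmic parent: $\hat\alpha_j(t+1)=\alpha_j(t+1-\tau^{\uparrow}_j(t))$, $\hat\beta_j^P(t+1)=\beta_j^P(t+1-\tau^{\downarrow}_j(t))$, $\hat\beta_j^Q(t+1)=\beta_j^Q(t+1-\tau^{\downarrow}_j(t))$. (4) $z_i^P(t+1)=R_{ii}\bigl(\lambda_i(t+1)+\sum_{j\in\mathcal C_i}\hat\alpha_j(t+1)\bigr)+\hat\beta_i^P(t+1)$ and $z_i^Q(t+1)=X_{ii}\bigl(\lambda_i(t+1)+\sum_{j\in\mathcal C_i}\hat\alpha_j(t+1)\bigr)+\hat\beta_i^Q(t+1)$. *)

(* Defs.v *)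
From HB Require Import structures.
From mathcomp Require Import all_boot all_order all_algebra.
Set Implicit Arguments. Unset Strict Implicit. Unset Printing Implicit Defensive.
Import Order.TTheory GRing.Theory Num.Theory.
Local Open Scope ring_scope.

(* Tree encoding: the non-root nodes 1..N are the ordinals 'I_N (node i+1 is
   the ordinal i); the root 0 is [None].  [par k] is the parent sigma_k
   (None = root).  The edge (sigma_k, k) is identified with its child k, so
   r k = r_{sigma_k k} and x k = x_{sigma_k k}. *)

Definition up (N : nat) (par : 'I_N -> option 'I_N) (o : option 'I_N)
  : option 'I_N := if o is Some k then par k else None.

Definition upn (N : nat) (par : 'I_N -> option 'I_N) (n : nat) (i : 'I_N)
  : option 'I_N := iter n (up par) (Some i).

Definition is_tree (N : nat) (par : 'I_N -> option 'I_N) : Prop :=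
  forall i : 'I_N, exists n, upn par n i = None.

(* the edge with child k lies on the path P_i from 0 to i
   (k is i or an ancestor of i; in a tree depth <= N so n <= N suffices) *)
Definition on_path (N : nat) (par : 'I_N -> option 'I_N) (i k : 'I_N) : bool :=
  [exists n : 'I_(N.+1), upn par n i == Some k].

(* R_ij = 2 * sum of r over P_i /\ P_j  (also used for X with x) *)
Definition Rmat (R : nzRingType) (N : nat) (par : 'I_N -> option 'I_N)
  (r : 'I_N -> R) (i j : 'I_N) : R :=
  2 * \sum_(k : 'I_N | on_path par i k && on_path par j k) r k.

(* dist(i,j): number of edges of the tree path between i and j
   = least a+b such that the a-th ancestor of i equals the b-th ancestor of j *)
Definition tdist (N : nat) (par : 'I_N -> option 'I_N) (i j : 'I_N) : nat :=
  \big[minn/(N + N)%N]_(a < N.+1)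
    \big[minn/(N + N)%N]_(b < N.+1 | upn par a i == upn par b j) (a + b)%N.

Definition diam (N : nat) (par : 'I_N -> option 'I_N) : nat :=
  \max_(i < N) \max_(j < N) tdist par i j.

Definition dij (N : nat) (par : 'I_N -> option 'I_N) (i j : 'I_N) : nat :=
  if (tdist par i j <= 1)%N then 0%N else (tdist par i j - 1)%N.

Definition clamp (R : realFieldType) (x a b : R) : R := Num.min (Num.max x a) b.
Definition posp (R : realFieldType) (x : R) : R := Num.max x 0.

(* Messages at negative
   times are represented via truncated nat subtraction hitting time 0, where
   all messages are 0. *)
Record DistOptRun (R : realFieldType) (N : nat) (par : 'I_N -> option 'I_N)
  (r x : 'I_N -> R) (v0 : R) (vlo vhi plo phi qlo qhi aP aQ bP bQ : 'I_N -> R)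
  (gamma : R) (tau_up tau_dn : 'I_N -> nat -> nat)
  (p q v llo lhi lam zP zQ alpha betaP betaQ ahat bPhat bQhat : nat -> 'I_N -> R)
  : Prop := {
  init_zP : forall i, zP 0%N i = 0;
  init_zQ : forall i, zQ 0%N i = 0;
  init_llo : forall i, llo 0%N i = 0;
  init_lhi : forall i, lhi 0%N i = 0;
  init_lam : forall i, lam 0%N i = 0;
  init_alpha : forall i, alpha 0%N i = 0;
  init_betaP : forall i, betaP 0%N i = 0;
  init_betaQ : forall i, betaQ 0%N i = 0;
  init_ahat : forall i, ahat 0%N i = 0;
  init_bPhat : forall i, bPhat 0%N i = 0;
  init_bQhat : forall i, bQhat 0%N i = 0;
  root_bPhat : forall t i, par i = None -> bPhat t i = 0;
  root_bQhat : forall t i, par i = None -> bQhat t i = 0;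
  step_p : forall t i, p t i = clamp ((zP t i - bP i) / aP i) (plo i) (phi i);
  step_q : forall t i, q t i = clamp ((zQ t i - bQ i) / aQ i) (qlo i) (qhi i);
  step_v : forall t i, v t i = \sum_(j : 'I_N) Rmat par r i j * p t j
                              + \sum_(j : 'I_N) Rmat par x i j * q t j + v0;
  step_llo : forall t i, llo t.+1 i = posp (llo t i + gamma * (vlo i - v t i));
  step_lhi : forall t i, lhi t.+1 i = posp (lhi t i + gamma * (v t i - vhi i));
  step_lam : forall t i, lam t.+1 i = llo t.+1 i - lhi t.+1 i;
  step_alpha : forall t i,
    alpha t.+1 i = lam t.+1 i + \sum_(j : 'I_N | par j == Some i) ahat t j;
  step_betaP : forall t i j, par j = Some i ->
    betaP t.+1 j = Rmat par r i i *
      (lam t.+1 i + \sum_(k : 'I_N | (par k == Some i) && (k != j)) ahat t k)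
      + bPhat t i;
  step_betaQ : forall t i j, par j = Some i ->
    betaQ t.+1 j = Rmat par x i i *
      (lam t.+1 i + \sum_(k : 'I_N | (par k == Some i) && (k != j)) ahat t k)
      + bQhat t i;
  step_ahat : forall t j, par j <> None ->
    ahat t.+1 j = alpha (t.+1 - tau_up j t)%N j;
  step_bPhat : forall t j, par j <> None ->
    bPhat t.+1 j = betaP (t.+1 - tau_dn j t)%N j;
  step_bQhat : forall t j, par j <> None ->
    bQhat t.+1 j = betaQ (t.+1 - tau_dn j t)%N j;
  step_zP : forall t i,
    zP t.+1 i = Rmat par r i i *
      (lam t.+1 i + \sum_(j : 'I_N | par j == Some i) ahat t.+1 j) + bPhat t.+1 i;
  step_zQ : forall t i,
    zQ t.+1 i = Rmat par x i i *
      (lam t.+1 i + \sum_(j : 'I_N | par j == Some i) ahat t.+1 j) + bQhat t.+1 i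
}.

(* Main.v *)
Require Import Defs.
From HB Require Import structures.
From mathcomp Require Import all_boot all_order all_algebra zify.
Set Implicit Arguments. Unset Strict Implicit. Unset Printing Implicit Defensive.
Import Order.TTheory GRing.Theory Num.Theory.


Lemma bigmin_le (I : finType) (P : pred I) (F : I -> nat) x i0 :
  P i0 -> \big[minn/x]_(i | P i) F i <= F i0.
Proof.
move=> Pi0; have : i0 \in index_enum I := mem_index_enum i0.
elim: (index_enum I) => //= a s IH; rewrite big_cons in_cons.
case/orP => [/eqP <-|/IH H]; first by rewrite Pi0 geq_minl.
by case: (P a) => //; rewrite geq_min H orbT.
Qed.

Section Tree.
Variable N : nat.
Variable par : 'I_N -> option 'I_N.
Hypothesis tree : is_tree par.

Local Notation anc e k := (on_path par k e).

Definition uo n (o : option 'I_N) := iter n (up par) o.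

Lemma uo_None n : uo n None = None.
Proof. by elim: n => //= n; rewrite /uo => ->. Qed.

Lemma upnD m n i : upn par (m + n) i = uo m (upn par n i).
Proof. by rewrite /upn iterD. Qed.

Lemma upnS n i : upn par n.+1 i = uo n (par i).
Proof. by rewrite /upn iterSr. Qed.

Lemma upn1 i : upn par 1 i = par i. Proof. by []. Qed.

Lemma tree' i : exists n, upn par n i == None.
Proof. by have [n H] := tree i; exists n; rewrite H. Qed.

Definition dep i := ex_minn (tree' i).

Lemma depP i n : (upn par n i == None) = (dep i <= n).
Proof.
rewrite /dep; case: ex_minnP => m /eqP Hm Hmin.
apply/idP/idP; first exact: Hmin.
by move=> le; rewrite -(subnK le) upnD Hm uo_None.
Qed.

Lemma depL n i y : upn par n i = Some y -> dep i = n + dep y.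
Proof.
move=> H.
have E m : (dep y <= m) = (dep i <= m + n) by rewrite -!depP upnD H.
have lt : n < dep i by rewrite ltnNge -depP H.
have h1 := E (dep y); rewrite leqnn in h1.
have h2 := E (dep i - n); rewrite subnK ?(ltnW lt) // leqnn in h2.
lia.
Qed.

Lemma dep_gt0 i : 0 < dep i.
Proof. by rewrite lt0n -leqn0 -depP. Qed.

Lemma upn_some m i : m < dep i -> upn par m i = Some (odflt i (upn par m i)).
Proof. by move=> lt; case E: upn => //; move: (depP i m); rewrite E eqxx; lia. Qed.

Lemma dep_leN i : dep i <= N.
Proof.
pose f (m : 'I_(dep i)) := odflt i (upn par m i).
have inj : injective f.
  move=> a b E; apply: val_inj.
  have := depL (upn_some (ltn_ord a)); have := depL (upn_some (ltn_ord b)).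
  rewrite -/(f a) -/(f b) E.
  by move=> h1 h2; apply/eqP; rewrite -(eqn_add2r (dep (f b))) -h1 -h2.
by have := @leq_card _ _ f inj; rewrite !card_ord.
Qed.

Lemma upn_lt n i y : upn par n i = Some y -> n < dep i.
Proof. by move=> H; rewrite ltnNge -depP H. Qed.

Lemma ancP e k : reflect (exists n, upn par n k = Some e) (anc e k).
Proof.
apply: (iffP existsP) => [[n /eqP H]|[n H]]; first by exists n.
have lt : n < N.+1 by have := upn_lt H; have := dep_leN k; lia.
by exists (Ordinal lt); apply/eqP.
Qed.

Lemma anc_refl e : anc e e.
Proof. by apply/ancP; exists 0. Qed.

Lemma anc_trans a b c : anc a b -> anc b c -> anc a c.
Proof.
move=> /ancP[n Hn] /ancP[m Hm]; apply/ancP; exists (n + m).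
by rewrite upnD Hm.
Qed.

Lemma anc_par j i e : par j = Some i -> anc e j = (e == j) || anc e i.
Proof.
move=> pj; apply/idP/idP.
  case/ancP => [[|n]]; first by case=> ->; rewrite eqxx.
  by rewrite upnS pj => H; apply/orP; right; apply/ancP; exists n.
case/orP => [/eqP ->|/ancP[n H]]; first exact: anc_refl.
by apply/ancP; exists n.+1; rewrite upnS pj.
Qed.

Lemma anc_top j e : par j = None -> anc e j = (e == j).
Proof.
move=> pj; apply/idP/idP; last by move/eqP->; exact: anc_refl.
case/ancP => [[|n]]; first by case=> ->; rewrite eqxx.
by rewrite upnS pj uo_None.
Qed.

Lemma dep_par j i : par j = Some i -> dep j = (dep i).+1.
Proof. by move=> pj; have := depL (n:=1) pj; lia. Qed.

Lemma anc_child_not j i : par j = Some i -> ~~ anc j i.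
Proof.
move=> pj; apply/negP => /ancP[n H].
have := depL H; have := dep_par pj; lia.
Qed.

Lemma anc_linear a b k : anc a k -> anc b k -> anc a b || anc b a.
Proof.
move=> /ancP[n Hn] /ancP[m Hm].
case: (leqP n m) => le.
  apply/orP; right; apply/ancP; exists (m - n).
  by rewrite -(subnK le) upnD Hn in Hm.
apply/orP; left; apply/ancP; exists (n - m).
by rewrite -(subnK (ltnW le)) upnD Hm in Hn.
Qed.

Lemma child_uniq r r' i k : par r = Some i -> par r' = Some i ->
  anc r k -> anc r' k -> r = r'.
Proof.
move=> pr pr' a a'; case/orP: (anc_linear a a') => H.
  rewrite (anc_par _ pr') in H; case/orP: H => [/eqP //|H].
  by have := anc_child_not pr; rewrite H.
rewrite (anc_par _ pr) in H; case/orP: H => [/eqP //|H].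
by have := anc_child_not pr'; rewrite H.
Qed.

Lemma anc_child i k : anc i k -> k != i -> exists2 j, par j = Some i & anc j k.
Proof.
case/ancP => [[|n] H ne]; first by case: H ne => ->; rewrite eqxx.
have lt : n < dep k by have := upn_lt H; lia.
have Hs := upn_some lt; set j := odflt _ _ in Hs.
exists j; last by apply/ancP; exists n.
by move: H; rewrite -add1n upnD Hs.
Qed.

Lemma anc_up j i k : par j = Some i -> anc j k -> anc i k.
Proof. by move=> pj; apply: anc_trans; rewrite (anc_par _ pj) anc_refl orbT. Qed.

Local Notation D := (tdist par).

Lemma Dle i k a b : a <= N -> b <= N -> upn par a i = upn par b k -> D i k <= a + b.
Proof.
move=> la lb E; rewrite /tdist.
have la' : a < N.+1 by lia.
have lb' : b < N.+1 by lia.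
apply: (leq_trans (@bigmin_le _ xpredT _ _ (Ordinal la') isT)).
by apply: (@bigmin_le _ _ _ _ (Ordinal lb')) => /=; rewrite E.
Qed.

Lemma Dex i k : D i k = N + N \/
  exists a b, a <= N /\ b <= N /\ upn par a i = upn par b k /\ D i k = a + b.
Proof.
rewrite /tdist.
apply: (big_ind (fun m => m = N + N \/ exists a b, a <= N /\ b <= N /\
            upn par a i = upn par b k /\ m = a + b)); first by left.
  move=> m1 m2 H1 H2; rewrite /minn; by case: ifP.
move=> a _.
apply: (big_ind (fun m => m = N + N \/ exists a0 b, a0 <= N /\ b <= N /\
            upn par a0 i = upn par b k /\ m = a0 + b)); first by left.
  move=> m1 m2 H1 H2; rewrite /minn; by case: ifP.
move=> b /eqP E; right; exists a, b; split; first by have := ltn_ord a; lia.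
split; first by have := ltn_ord b; lia.
by [].
Qed.

Lemma Dmin i k : exists a b, a <= dep i /\ b <= dep k /\
  upn par a i = upn par b k /\ D i k = a + b.
Proof.
have Ed : upn par (dep i) i = upn par (dep k) k.
  by move: (depP i (dep i)) (depP k (dep k)); rewrite !leqnn => /eqP-> /eqP->.
have hi := dep_leN i; have hk := dep_leN k.
have Dl := Dle hi hk Ed.
case: (Dex i k) => [H|[a [b [la [lb [E HD]]]]]].
  by exists (dep i), (dep k); do 3!split => //; lia.
exists a, b; rewrite HD; split; last split => //.
  case: (leqP a (dep i)) => // lt.
  have : upn par a i == None by rewrite depP ltnW.
  rewrite E depP => lb'; lia.
case: (leqP b (dep k)) => // lt.
have : upn par b k == None by rewrite depP ltnW.
rewrite -E depP => la'; lia.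
Qed.

Lemma Dii i : D i i = 0.
Proof. by have := Dle (leq0n N) (leq0n N) (erefl (upn par 0 i)); lia. Qed.

Lemma D0 i k : D i k = 0 -> k = i.
Proof.
have [[|a] [[|b] [_ [_ [E H]]]]] := Dmin i k; try lia.
by case: E.
Qed.

Lemma D_anc x k h : upn par h k = Some x -> D x k = h.
Proof.
move=> H; apply/eqP; rewrite eqn_leq; apply/andP; split.
  have hh : h <= N by have := upn_lt H; have := dep_leN k; lia.
  by have := Dle (a:=0) (b:=h) (i:=x) (k:=k) (leq0n N) hh ltac:(by rewrite H).
have [a [b [la [lb [E ->]]]]] := Dmin x k.
have dk := depL H.
case Ea: (upn par a x) E => [y|] E.
  have := depL Ea; have := depL (esym E); lia.
have : dep x <= a by rewrite -depP Ea.
have : dep k <= b by rewrite -depP -E.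
lia.
Qed.

Lemma D_par_anc j i k : par j = Some i -> anc j k -> D i k = (D j k).+1.
Proof.
move=> pj /ancP[h H].
have H' : upn par h.+1 k = Some i by rewrite -add1n upnD H.
by rewrite (D_anc H) (D_anc H').
Qed.

Lemma D_par_nanc j i k : par j = Some i -> ~~ anc j k -> D j k = (D i k).+1.
Proof.
move=> pj na; apply/eqP; rewrite eqn_leq; apply/andP; split.
  have [a [b [la [lb [E ->]]]]] := Dmin i k.
  have dj := dep_par pj; have := dep_leN j; have := dep_leN k => hk hj.
  have -> : (a + b).+1 = a.+1 + b by lia.
  by apply: Dle; [lia|lia|rewrite upnS pj].
have [[|a] [b [la [lb [E ->]]]]] := Dmin j k.
  by move: na; rewrite (introT (ancP j k)) //; exists b.
move: E; rewrite upnS pj => E.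
have dj := dep_par pj; have := dep_leN j; have := dep_leN k => hk hj.
have := Dle (a:=a) (b:=b) (i:=i) (k:=k) ltac:(lia) ltac:(lia) E; lia.
Qed.

Lemma D_pos i k : k != i -> 0 < D i k.
Proof. by move=> ne; rewrite lt0n; apply/eqP => /D0 E; rewrite E eqxx in ne. Qed.


Local Open Scope ring_scope.

Lemma Rm_anc (T : nzRingType) (rr : 'I_N -> T) i k :
  anc i k -> Rmat par rr i k = Rmat par rr i i.
Proof.
move=> a; rewrite /Rmat; congr (_ * _); apply: eq_bigl => e; rewrite andbb.
by apply/andP/idP => [[]//|h]; split => //; exact: anc_trans h a.
Qed.

Lemma Rm_child (T : nzRingType) (rr : 'I_N -> T) j i k :
  par j = Some i -> ~~ anc j k -> Rmat par rr j k = Rmat par rr i k.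
Proof.
move=> pj na; rewrite /Rmat; congr (_ * _); apply: eq_bigl => e.
rewrite (anc_par _ pj); case: (e =P j) => [->|_] //=.
by rewrite (negbTE na) !andbF.
Qed.

Lemma Rm_top (T : nzRingType) (rr : 'I_N -> T) j k :
  par j = None -> ~~ anc j k -> Rmat par rr j k = 0.
Proof.
move=> pj na; rewrite /Rmat big_pred0 ?mulr0 // => e.
rewrite (anc_top _ pj); case: (e =P j) => [->|] //=.
by rewrite (negbTE na).
Qed.

Definition ch i k := odflt k [pick j | (par j == Some i) && anc j k].

Lemma ch_spec i k : anc i k -> k != i -> par (ch i k) = Some i /\ anc (ch i k) k.
Proof.
move=> a ne; rewrite /ch; case: pickP => [j /andP[/eqP ? ?] //|H].
have [j pj aj] := anc_child a ne.
by move: (H j); rewrite pj eqxx aj.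
Qed.

Lemma ch_eq i k j : par j = Some i -> anc j k -> ch i k = j.
Proof.
move=> pj aj.
have ai := anc_up pj aj.
have ne : k != i by apply/eqP => E; move: (anc_child_not pj); rewrite -E aj.
have [pc ac] := ch_spec ai ne.
exact: child_uniq pc pj ac aj.
Qed.

Lemma sum_children (T : nzRingType) (Q : pred 'I_N) i (f : 'I_N -> 'I_N -> T) :
  \sum_(j | (par j == Some i) && Q j) \sum_k (anc j k)%:R * f j k
  = \sum_k ((anc i k) && (k != i) && Q (ch i k))%:R * f (ch i k) k.
Proof.
rewrite exchange_big /=; apply: eq_bigr => k _.
case: (boolP (anc i k && (k != i))) => [/andP[a ne]|nb] /=.
  have [pc ac] := ch_spec a ne.
  case: (boolP (Q (ch i k))) => Qc.
    rewrite (bigD1 (ch i k)) /=; last by rewrite pc eqxx.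
    rewrite ac big1 ?addr0 // => j /andP[/andP[/eqP pj _] nej].
    case: (boolP (anc j k)) => aj; last by rewrite mul0r.
    by rewrite (child_uniq pj pc aj ac) eqxx in nej.
  rewrite mul0r big1 // => j /andP[/eqP pj Qj].
  case: (boolP (anc j k)) => aj; last by rewrite mul0r.
  by move: Qc; rewrite (ch_eq pj aj) Qj.
rewrite mul0r big1 // => j /andP[/eqP pj _].
case: (boolP (anc j k)) => aj; last by rewrite mul0r.
have ne : k != i by apply/eqP => E; move: (anc_child_not pj); rewrite -E aj.
by rewrite (anc_up pj aj) ne in nb.
Qed.

Lemma sum_children_all (T : nzRingType) i (f : 'I_N -> 'I_N -> T) :
  \sum_(j | par j == Some i) \sum_k (anc j k)%:R * f j k
  = \sum_k ((anc i k) && (k != i))%:R * f (ch i k) k.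
Proof.
rewrite (eq_bigl (fun j => (par j == Some i) && xpredT j)); last by move=> j; rewrite andbT.
by rewrite sum_children; apply: eq_bigr => k _; rewrite andbT.
Qed.


Section Main.
Variable R : realFieldType.
Variables (r x : 'I_N -> R) (v0 : R) (vlo vhi plo phi qlo qhi aP aQ bP bQ : 'I_N -> R).
Variables (gamma : R) (tau_up tau_dn : 'I_N -> nat -> nat).
Variables (p q v llo lhi lam zP zQ alpha betaP betaQ ahat bPhat bQhat : nat -> 'I_N -> R).
Hypothesis run : DistOptRun par r x v0 vlo vhi plo phi qlo qhi aP aQ bP bQ gamma tau_up tau_dn
    p q v llo lhi lam zP zQ alpha betaP betaQ ahat bPhat bQhat.
Variable tau : nat.
Hypothesis taub : forall j t, par j <> None -> (tau_up j t <= tau)%N /\ (tau_dn j t <= tau)%N.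

Local Notation D := (tdist par).

Definition repA t i (s : 'I_N -> nat) :=
  (forall k, D i k <= s k <= (tau+1) * D i k)%N /\
  alpha t i = \sum_k (anc i k)%:R * lam (t - s k)%N k.
Definition repAh t j (s : 'I_N -> nat) :=
  (forall k, D j k <= s k <= tau + (tau+1) * D j k)%N /\
  ahat t j = \sum_k (anc j k)%:R * lam (t - s k)%N k.
Definition repB t j (s : 'I_N -> nat) :=
  (forall k, (D j k).-1 <= s k <= (tau+1) * (D j k).-1)%N /\
  betaP t j = \sum_k (~~ anc j k)%:R * Rmat par r j k * lam (t - s k)%N k /\
  betaQ t j = \sum_k (~~ anc j k)%:R * Rmat par x j k * lam (t - s k)%N k.
Definition repBh t j (s : 'I_N -> nat) :=
  (forall k, (D j k).-1 <= s k <= tau + (tau+1) * (D j k).-1)%N /\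
  bPhat t j = \sum_k (~~ anc j k)%:R * Rmat par r j k * lam (t - s k)%N k /\
  bQhat t j = \sum_k (~~ anc j k)%:R * Rmat par x j k * lam (t - s k)%N k.
Definition repZ t i (s : 'I_N -> nat) :=
  (forall k, (D i k).-1 <= s k <= ((tau+1) * D i k).-1)%N /\
  zP t i = \sum_k Rmat par r i k * lam (t - s k)%N k /\
  zQ t i = \sum_k Rmat par x i k * lam (t - s k)%N k.

Lemma sum0 (c : 'I_N -> R) (s : 'I_N -> nat) : \sum_k c k * lam (0 - s k)%N k = 0.
Proof. by apply: big1 => k _; rewrite sub0n (init_lam run) mulr0. Qed.

Definition nA (Sh : 'I_N -> 'I_N -> nat) i k :=
  if anc i k then (if k == i then 0%N else (Sh (ch i k) k).+1) else D i k.

Lemma some_ne (i j : 'I_N) : par j = Some i -> par j <> None.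
Proof. by move=> ->. Qed.

Lemma stepA t Sh : (forall j, par j <> None -> repAh t j (Sh j)) ->
  forall i, repA t.+1 i (nA Sh i).
Proof.
move=> H i; split.
  move=> k; rewrite /nA; case: ifP => a; last by nia.
  case: eqP => [->|ne]; first by rewrite Dii.
  have [pc ac] := ch_spec a (introN eqP ne).
  have := (H _ (some_ne pc)).1 k; rewrite (D_par_anc pc ac); nia.
rewrite (step_alpha run).
rewrite (eq_bigr (fun j => \sum_k (anc j k)%:R * lam (t - Sh j k)%N k)); last first.
  by move=> j /eqP pj; rewrite (H j (some_ne pj)).2.
rewrite sum_children_all.
rewrite [RHS](bigD1 i) //= anc_refl /nA anc_refl eqxx subn0 mul1r.
rewrite (bigD1 i) //= eqxx andbF mul0r add0r; congr (_ + _).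
apply: eq_bigr => k ne; rewrite ne andbT.
case: (anc i k) => /=; last by rewrite !mul0r.
by rewrite (negbTE ne) subSS.
Qed.

Lemma stepAh t j s : par j <> None -> repA (t.+1 - tau_up j t) j s ->
  repAh t.+1 j (fun k => tau_up j t + s k)%N.
Proof.
move=> pj [B E]; have [tu _] := taub t pj; split.
  by move=> k; have := B k; nia.
rewrite (step_ahat run) // E; apply: eq_bigr => k _; by rewrite subnDA.
Qed.

Definition nB (Sh Sbh : 'I_N -> 'I_N -> nat) j k :=
  match par j with
  | Some i => if anc j k then (D j k).-1 else if k == i then 0%N
              else if anc i k then (Sh (ch i k) k).+1 else (Sbh i k).+1
  | None => 0%N
  end.

Lemma stepB_eq t Sh Sbh (rr : 'I_N -> R) j i hb : par j = Some i ->
  (forall j, par j <> None -> repAh t j (Sh j)) ->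
  hb = \sum_k (~~ anc i k)%:R * Rmat par rr i k * lam (t - Sbh i k)%N k ->
  Rmat par rr i i * (lam t.+1 i + \sum_(k | (par k == Some i) && (k != j)) ahat t k) + hb
  = \sum_k (~~ anc j k)%:R * Rmat par rr j k * lam (t.+1 - nB Sh Sbh j k)%N k.
Proof.
move=> pj HA ->.
rewrite (eq_bigr (fun k => \sum_k' (anc k k')%:R * lam (t - Sh k k')%N k')); last first.
  by move=> k /andP[/eqP pk _]; rewrite (HA k (some_ne pk)).2.
rewrite (sum_children (fun k => k != j)) mulrDr mulr_sumr.
have nji := anc_child_not pj.
rewrite [RHS](bigD1 i) //= (negbTE nji) /nB pj (negbTE nji) eqxx subn0 mul1r.
rewrite (Rm_child rr pj nji) -addrA; congr (_ + _).
rewrite [X in X + _](bigD1 i) //= eqxx andbF mul0r mulr0 add0r.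
rewrite [X in _ + X](bigD1 i) //= anc_refl !mul0r add0r.
rewrite -big_split /=; apply: eq_bigr => k ne.
rewrite (negbTE ne) andbT.
case: (boolP (anc j k)) => ajk /=.
  rewrite (anc_up pj ajk) (ch_eq pj ajk) eqxx /=.
  by rewrite !(mul0r, mulr0, addr0).
rewrite (Rm_child rr pj ajk).
case: (boolP (anc i k)) => aik /=.
  have [pc ac] := ch_spec aik ne.
  have cj : ch i k != j by apply: contraNneq ajk => <-.
  by rewrite cj (Rm_anc rr aik) subSS !mul1r !mul0r addr0.
by rewrite subSS !mul0r mulr0 add0r mul1r.
Qed.

Lemma stepB t Sh Sbh : (forall j, par j <> None -> repAh t j (Sh j)) ->
  (forall j, repBh t j (Sbh j)) ->
  forall j, par j <> None -> repB t.+1 j (nB Sh Sbh j).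
Proof.
move=> HA HB j; case pj: (par j) => [i|] // _.
have nji := anc_child_not pj.
split; last split.
- move=> k; rewrite /nB pj; case: ifP => ajk; first by nia.
  case: eqP => [->|ne].
    by rewrite (D_par_nanc pj nji) Dii.
  have ne' : k != i by apply/eqP.
  have Dj := D_par_nanc pj (negbT ajk).
  case: ifP => aik.
    have [pc ac] := ch_spec aik ne'.
    have Di := D_par_anc pc ac.
    have := (HA _ (some_ne pc)).1 k; rewrite Dj Di; nia.
  have := (HB i).1 k; have := D_pos ne'; rewrite Dj; nia.
- rewrite (step_betaP run _ pj); apply: stepB_eq => //; exact: (HB i).2.1.
- rewrite (step_betaQ run _ pj); apply: stepB_eq => //; exact: (HB i).2.2.
Qed.

Lemma stepBh t j s : par j <> None -> repB (t.+1 - tau_dn j t) j s ->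
  repBh t.+1 j (fun k => tau_dn j t + s k)%N.
Proof.
move=> pj [B [EP EQ]]; have [_ td] := taub t pj; split; last split.
- by move=> k; have := B k; nia.
- rewrite (step_bPhat run) // EP; apply: eq_bigr => k _; by rewrite subnDA.
- rewrite (step_bQhat run) // EQ; apply: eq_bigr => k _; by rewrite subnDA.
Qed.

Lemma top_sum0 (rr : 'I_N -> R) j (s : 'I_N -> nat) t : par j = None ->
  \sum_k (~~ anc j k)%:R * Rmat par rr j k * lam (t - s k)%N k = 0.
Proof.
move=> pj; apply: big1 => k _.
case: (boolP (anc j k)) => a; first by rewrite !mul0r.
by rewrite Rm_top // mulr0 mul0r.
Qed.

Lemma stepBh_top t j : par j = None -> repBh t j (fun k => (D j k).-1).
Proof.
move=> pj; split; last split.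
- by move=> k; nia.
- by rewrite (root_bPhat run) // top_sum0.
- by rewrite (root_bQhat run) // top_sum0.
Qed.

Definition nZ (Sh Sbh : 'I_N -> 'I_N -> nat) i k :=
  if anc i k then (if k == i then 0%N else Sh (ch i k) k) else Sbh i k.

Lemma stepZ_eq t Sh Sbh (rr : 'I_N -> R) i hb :
  (forall j, par j <> None -> repAh t j (Sh j)) ->
  hb = \sum_k (~~ anc i k)%:R * Rmat par rr i k * lam (t - Sbh i k)%N k ->
  Rmat par rr i i * (lam t i + \sum_(j | par j == Some i) ahat t j) + hb
  = \sum_k Rmat par rr i k * lam (t - nZ Sh Sbh i k)%N k.
Proof.
move=> HA ->.
rewrite (eq_bigr (fun k => \sum_k' (anc k k')%:R * lam (t - Sh k k')%N k')); last first.
  by move=> k /eqP pk; rewrite (HA k (some_ne pk)).2.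
rewrite sum_children_all mulrDr mulr_sumr.
rewrite [RHS](bigD1 i) //= /nZ anc_refl eqxx subn0 -addrA; congr (_ + _).
rewrite [X in X + _](bigD1 i) //= eqxx andbF mul0r mulr0 add0r.
rewrite [X in _ + X](bigD1 i) //= anc_refl !mul0r add0r.
rewrite -big_split /=; apply: eq_bigr => k ne.
rewrite (negbTE ne) andbT.
case: (boolP (anc i k)) => aik /=.
  by rewrite (Rm_anc rr aik) !mul1r !mul0r addr0.
by rewrite mul0r mulr0 mul1r add0r.
Qed.

Lemma stepZ t Sh Sbh : (forall j, par j <> None -> repAh t.+1 j (Sh j)) ->
  (forall j, repBh t.+1 j (Sbh j)) -> forall i, repZ t.+1 i (nZ Sh Sbh i).
Proof.
move=> HA HB i; split; last split.
- move=> k; rewrite /nZ; case: ifP => a.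
    case: eqP => [->|ne]; first by rewrite Dii.
    have [pc ac] := ch_spec a (introN eqP ne).
    have := (HA _ (some_ne pc)).1 k; rewrite (D_par_anc pc ac); nia.
  have ne : k != i by apply: contraFneq a => ->; exact: anc_refl.
  have := (HB i).1 k; have := D_pos ne; nia.
- rewrite (step_zP run); apply: stepZ_eq => //; exact: (HB i).2.1.
- rewrite (step_zQ run); apply: stepZ_eq => //; exact: (HB i).2.2.
Qed.

Definition Inv t := exists SA SAh SB SBh : nat -> 'I_N -> 'I_N -> nat,
  forall t', (t' <= t)%N ->
    (forall i, repA t' i (SA t' i)) /\
    (forall j, par j <> None -> repAh t' j (SAh t' j)) /\
    (forall j, par j <> None -> repB t' j (SB t' j)) /\
    (forall j, repBh t' j (SBh t' j)).

Lemma Inv0 : Inv 0.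
Proof.
exists (fun _ => D), (fun _ => D), (fun _ j k => (D j k).-1), (fun _ j k => (D j k).-1).
move=> t'; rewrite leqn0 => /eqP ->.
split; last split; last split.
- move=> i; split; first by move=> k; nia.
  by rewrite (init_alpha run) sum0.
- move=> j _; split; first by move=> k; nia.
  by rewrite (init_ahat run) sum0.
- move=> j _; split; first by move=> k; nia.
  by rewrite (init_betaP run) (init_betaQ run) !sum0.
- move=> j; split; first by move=> k; nia.
  by rewrite (init_bPhat run) (init_bQhat run) !sum0.
Qed.

Lemma InvS t : Inv t -> Inv t.+1.
Proof.
case=> [SA [SAh [SB [SBh H]]]].
have [_ [HAh [_ HBh]]] := H t (leqnn t).
pose SA' := fun t' => if t' == t.+1 then nA (SAh t) else SA t'.
have HA' : forall t', (t' <= t.+1)%N -> forall i, repA t' i (SA' t' i).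
  move=> t' le i; rewrite /SA'; case: eqP => [->|ne]; first exact: stepA HAh i.
  have le' : (t' <= t)%N by lia.
  exact: (H t' le').1 i.
pose SAh' := fun t' => if t' == t.+1 then
  (fun j k => tau_up j t + SA' (t.+1 - tau_up j t)%N j k)%N else SAh t'.
have HAh' : forall t', (t' <= t.+1)%N -> forall j, par j <> None -> repAh t' j (SAh' t' j).
  move=> t' le j pj; rewrite /SAh'; case: eqP => [->|ne].
    by apply: stepAh => //; apply: HA'; exact: leq_subr.
  have le' : (t' <= t)%N by lia.
  exact: (H t' le').2.1 j pj.
pose SB' := fun t' => if t' == t.+1 then nB (SAh t) (SBh t) else SB t'.
have HB' : forall t', (t' <= t.+1)%N -> forall j, par j <> None -> repB t' j (SB' t' j).
  move=> t' le j pj; rewrite /SB'; case: eqP => [->|ne]; first exact: stepB.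
  have le' : (t' <= t)%N by lia.
  exact: (H t' le').2.2.1 j pj.
pose SBh' := fun t' => if t' == t.+1 then
  (fun j k => if par j is Some _ then (tau_dn j t + SB' (t.+1 - tau_dn j t)%N j k)%N
              else (D j k).-1) else SBh t'.
have HBh' : forall t', (t' <= t.+1)%N -> forall j, repBh t' j (SBh' t' j).
  move=> t' le j; rewrite /SBh'; case: eqP => [->|ne].
    case pj: (par j) => [i|]; last exact: stepBh_top.
    by apply: stepBh; [rewrite pj | apply: HB'; [exact: leq_subr | rewrite pj]].
  have le' : (t' <= t)%N by lia.
  exact: (H t' le').2.2.2 j.
exists SA', SAh', SB', SBh' => t' le.
split; [exact: HA' | split; [exact: HAh' | split; [exact: HB' | exact: HBh']]].
Qed.

Lemma main_rep i t : exists s, repZ t i s.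
Proof.
case: t => [|t].
  exists (fun k => (D i k).-1); split; first by move=> k; nia.
  by rewrite (init_zP run) (init_zQ run) !sum0.
have : Inv t.+1 by elim: t.+1 => [|n IH]; [exact: Inv0 | exact: InvS].
case=> [SA [SAh [SB [SBh H]]]].
have [_ [HAh [_ HBh]]] := H t.+1 (leqnn _).
by exists (nZ (SAh t.+1) (SBh t.+1) i); apply: stepZ.
Qed.

End Main.
End Tree.

Local Open Scope ring_scope.

Theorem lemma2 (R : realFieldType) (N : nat) (par : 'I_N -> option 'I_N)
  (r x : 'I_N -> R) (v0 : R) (vlo vhi plo phi qlo qhi aP aQ bP bQ : 'I_N -> R)
  (gamma : R) (tau_up tau_dn : 'I_N -> nat -> nat)
  (p q v llo lhi lam zP zQ alpha betaP betaQ ahat bPhat bQhat : nat -> 'I_N -> R) :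
  is_tree par ->
  (forall k, 0 <= r k) -> (forall k, 0 <= x k) ->
  (forall i, vlo i <= vhi i) -> (forall i, plo i <= phi i) ->
  (forall i, qlo i <= qhi i) ->
  (forall i, 0 < aP i) -> (forall i, 0 < aQ i) ->
  0 < gamma ->
  DistOptRun par r x v0 vlo vhi plo phi qlo qhi aP aQ bP bQ gamma tau_up tau_dn
    p q v llo lhi lam zP zQ alpha betaP betaQ ahat bPhat bQhat ->
  (* (a) zero delays *)
  ((forall j t, par j <> None -> tau_up j t = 0%N /\ tau_dn j t = 0%N) ->
   forall (i : 'I_N) (t : nat),
     zP t i = \sum_(j : 'I_N) Rmat par r i j * lam (t - dij par i j)%N j /\
     zQ t i = \sum_(j : 'I_N) Rmat par x i j * lam (t - dij par i j)%N j)
  /\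
  (* (b) delays bounded by tau_max *)
  (forall tau_max : nat,
   (forall j t, par j <> None -> (tau_up j t <= tau_max)%N /\ (tau_dn j t <= tau_max)%N) ->
   forall (i : 'I_N) (t : nat), exists taubar : 'I_N -> nat,
     (forall j, (taubar j <= (tau_max + 1) * diam par)%N) /\
     zP t i = \sum_(j : 'I_N) Rmat par r i j * lam (t - taubar j)%N j /\
     zQ t i = \sum_(j : 'I_N) Rmat par x i j * lam (t - taubar j)%N j).
Proof.
Proof.
move=> tree _ _ _ _ _ _ _ _ run; split.
  move=> H0 i t.
  have taub0 : forall j t, par j <> None -> (tau_up j t <= 0)%N /\ (tau_dn j t <= 0)%N.
    by move=> j t' pj; have [-> ->] := H0 j t' pj.
  have [s [B [EP EQ]]] := main_rep tree run taub0 i t.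
  have e k : s k = dij par i k by have := B k; rewrite /dij; case: ifP; lia.
  by rewrite EP EQ; split; apply: eq_bigr => k _; rewrite e.
move=> tm Hb i t.
have [s [B [EP EQ]]] := main_rep tree run Hb i t.
exists s; split => // k.
have Hd : (tdist par i k <= diam par)%N.
  apply: leq_trans (leq_bigmax (F := fun j => tdist par i j) k) _.
  exact: (leq_bigmax (F := fun i => \max_(j < N) tdist par i j) i).
have := B k; nia.
Qed.
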